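(* Let $f:\{0,1\}^N\to\{0,1\}$ be a total function. Then \[\mathrm{H}(\mathrm{C}_f)=O(\mathrm{H}(\mathrm{bs}_f)^2\log N).\]
   Context: $\mathrm{C}_f(x)$ is the certificate complexity and $\mathrm{bs}_f(x)$ the block sensitivity (maximum number of disjoint sensitive blocks) of $f$ at $x$. For $g:\{0,1\}^N\to[0,\infty)$, the H-index $\mathrm{H}(g)$ is the maximum $h$ such that at least $2^h$ inputs satisfy $g(x)\geq h$ (equivalently, the minimum $h$ such that at most $2^h$ inputs satisfy $g(x)>h$). *)

(* Defs.v *)
From mathcomp Require Import all_boot all_order all_algebra.
From mathcomp Require Import classical_sets reals exp.
Set Implicit Arguments. Unset Strict Implicit. Unset Printing Implicit Defensive.
Import Order.TTheory GRing.Theory Num.Theory.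
Local Open Scope ring_scope.

Definition input (N : nat) := {ffun 'I_N -> bool}.

Definition agree_on N (S : {set 'I_N}) (x y : input N) : bool :=
  [forall i in S, x i == y i].

Definition is_certificate N (f : input N -> bool) (x : input N) (S : {set 'I_N}) : bool :=
  [forall y : input N, agree_on S x y ==> (f y == f x)].

(* C_f(x): minimum size of a certificate (the full set is always one, so the
   default value N is never the effective answer unless attained) *)
Definition cert_complexity N (f : input N -> bool) (x : input N) : nat :=
  \big[minn/N]_(S : {set 'I_N} | is_certificate f x S) #|S|.

Definition flip N (x : input N) (B : {set 'I_N}) : input N :=
  [ffun i => if i \in B then ~~ x i else x i].

Definition sensitive_block N (f : input N -> bool) (x : input N) (B : {set 'I_N}) : bool :=
  f (flip x B) != f x.

Definition block_sensitivity N (f : input N -> bool) (x : input N) : nat :=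
  \max_(P : {set {set 'I_N}} |
          finset.trivIset P && [forall B in P, sensitive_block f x B]) #|P|.

(* H-index of g : {0,1}^N -> [0,oo): the maximum real h such that at least
   2^h inputs satisfy g x >= h (the maximum exists; we take the supremum). *)
Definition Hindex (R : realType) N (g : input N -> R) : R :=
  sup [set h : R | (2 : R) `^ h <= (#|[set x : input N | h <= g x]|)%:R].

(* Main.v *)
Require Import Defs.
From mathcomp Require Import all_boot all_order all_algebra.
From mathcomp Require Import reals exp.
Import Order.TTheory GRing.Theory Num.Theory.
Set Implicit Arguments. Unset Strict Implicit. Unset Printing Implicit Defensive.
From mathcomp Require Import zify ring lra.

Lemma card_bigcup_leq (I T : finType) (A : {pred I}) (F : I -> {set T}) :
  #|\bigcup_(i in A) F i| <= \sum_(i in A) #|F i|.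
Proof.
elim/big_rec2: _ => [|i s S _ IH]; first by rewrite cards0.
by rewrite (leq_trans (leq_card_setU _ _).1) ?leq_add.
Qed.

Lemma bigmin_leq_cond (I : finType) (P : pred I) (F : I -> nat) x j :
  P j -> \big[minn/x]_(i | P i) F i <= F j.
Proof.
move=> Pj; rewrite unlock /=.
have : j \in index_enum I by rewrite mem_index_enum.
elim: (index_enum I) => [//|a r IH]; rewrite inE /=.
case/orP=> [/eqP <-|jr]; first by rewrite Pj geq_minl.
case: (P a); last exact: IH.
by rewrite (leq_trans (geq_minr _ _)) ?IH.
Qed.

Definition sepb N (Y : {set input N}) (k : nat) (x : input N) : bool :=
  [exists H : {set 'I_N}, (#|H| <= k) && [forall y in Y, [exists i in H, x i != y i]]].

Lemma NS_card N k : forall Y : {set input N}, #|Y| < 2^k ->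
  #|[set x | ~~ sepb Y k x]| <= (2*N+1)^k.
Proof.
elim: k => [|k IH] Y hY.
  have -> : Y = set0 by apply/eqP; rewrite -cards_eq0; rewrite expn0 in hY; lia.
  rewrite expn0 (@leq_trans 0) // leqn0 cards_eq0; apply/eqP/setP=> x; rewrite !inE negbK.
  apply/existsP; exists set0; rewrite cards0 /=; apply/forallP=> y; by rewrite inE.
pose Yp (p : 'I_N * bool) := [set y in Y | y p.1 == p.2].
pose maj := [set x : input N | [forall i, #|Y| < 2 * #|Yp (i, x i)|]].
pose S p := if 2 * #|Yp p| <= #|Y| then [set x | ~~ sepb (Yp p) k x] else set0.
have sub : [set x | ~~ sepb Y k.+1 x] \subset maj :|: \bigcup_p S p.
  apply/subsetP=> x; rewrite !inE => nsep.
  case: (boolP [forall i, #|Y| < 2 * #|Yp (i, x i)|]) => [//|/forallPn [i hi]].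
  apply/orP; right; apply/bigcupP; exists (i, x i) => //.
  rewrite -leqNgt in hi; rewrite /S hi inE; apply/negP=> /existsP [H /andP [Hk /forallP Hs]].
  move/negP: nsep; apply; apply/existsP; exists (i |: H).
  rewrite (leq_trans (leq_card_setU _ _).1) ?cards1 ?add1n ?ltnS //=.
  apply/forallP=> y; apply/implyP=> yY.
  case: (eqVneq (y i) (x i)) => [yi|yi].
    have := Hs y; rewrite !inE yY yi eqxx /= => /existsP [j /andP [jH xj]].
    by apply/existsP; exists j; rewrite !inE jH orbT.
  by apply/existsP; exists i; rewrite !inE eqxx eq_sym yi.
rewrite (leq_trans (subset_leq_card sub)) // (leq_trans (leq_card_setU _ _).1) //.
have majc : #|maj| <= 1.
  apply/card_le1_eqP => x1 x2; rewrite !inE => /forallP h1 /forallP h2.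
  apply/ffunP=> i; apply/eqP/negPn/negP => ne.
  have e2 : x2 i = ~~ x1 i by move: ne; case: (x1 i); case: (x2 i).
  have := h1 i; have := h2 i; rewrite e2 => a b.
  have : #|Yp (i, x1 i)| + #|Yp (i, ~~ x1 i)| <= #|Y|.
    rewrite -cardsUI.
    have -> : Yp (i, x1 i) :&: Yp (i, ~~ x1 i) = set0.
      apply/setP=> y; rewrite !inE /=; case: (y i); case: (x1 i); by rewrite ?andbF.
    rewrite cards0 addn0; apply: subset_leq_card; apply/subsetP=> y.
    by rewrite !inE => /orP [/andP [] | /andP []].
  move: a b; move: #|Yp (i, x1 i)| #|Yp (i, ~~ x1 i)| #|Y| => u v w; lia.
have bigc : #|\bigcup_p S p| <= 2 * N * (2*N+1)^k.
  rewrite (leq_trans (card_bigcup_leq _ _)) //.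
  rewrite (@leq_trans (\sum_(p : 'I_N * bool) (2*N+1)^k)) //.
    apply: leq_sum => p _; rewrite /S; case: ifP => hp; last by rewrite cards0.
    apply: IH; rewrite expnS in hY; lia.
  rewrite sum_nat_const card_prod card_ord card_bool. lia.
have : 1 <= (2*N+1)^k by rewrite expn_gt0 addn1.
rewrite expnS; move: ((2*N+1)^k) majc bigc => a; nia.
Qed.
Lemma flip_diff N (x z : input N) : flip x [set i | x i != z i] = z.
Proof. by apply/ffunP=> i; rewrite ffunE inE; case: (x i); case: (z i). Qed.

Lemma flip0 N (x : input N) : flip x set0 = x.
Proof. by apply/ffunP=> i; rewrite ffunE inE. Qed.

Lemma flip_flip1 N (x : input N) (B : {set 'I_N}) i : i \in B ->
  flip (flip x B) [set i] = flip x (B :\ i).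
Proof.
move=> iB; apply/ffunP=> j; rewrite !ffunE !inE.
case: (eqVneq j i) => [->|ji] /=; first by rewrite iB negbK.
by [].
Qed.

Lemma bs_ge N (f : input N -> bool) x (P : {set {set 'I_N}}) :
  finset.trivIset P -> (forall B, B \in P -> sensitive_block f x B) ->
  #|P| <= block_sensitivity f x.
Proof.
move=> tP sP; rewrite /block_sensitivity.
apply: (leq_bigmax_cond P); rewrite tP /=; apply/forallP=> B; apply/implyP; exact: sP.
Qed.

Lemma cert_le N (f : input N -> bool) x S :
  is_certificate f x S -> cert_complexity f x <= #|S|.
Proof. move=> cS; exact: bigmin_leq_cond. Qed.

Lemma cert_small N (f : input N -> bool) (m : nat) (x : input N) :
  sepb [set y | m <= block_sensitivity f y] m x ->
  cert_complexity f x <= (m-1)*(m-1) + m.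
Proof.
move/existsP=> [H /andP[Hk /forallP Hsep]].
have xgood : block_sensitivity f x < m.
  rewrite ltnNge; apply/negP=> hb; have := Hsep x; rewrite inE hb /=.
  by move=> /existsP[i /andP[_]]; rewrite eqxx.
pose okP (P : {set {set 'I_N}}) :=
  finset.trivIset P && [forall B in P, sensitive_block f x B && (#|B| < m)].
have ok0 : okP set0.
  rewrite /okP; apply/andP; split.
    by apply/trivIsetP => A B; rewrite inE.
  by apply/forallP=> B; rewrite inE.
case: (arg_maxnP (fun P : {set {set 'I_N}} => #|P|) ok0) => P okPP maxP.
move: (okPP) => /andP[trP /forallP senP].
have cardP : #|P| <= m - 1.
  have : #|P| <= block_sensitivity f x.
    apply: bs_ge => // B BP; by have /andP[] := implyP (senP B) BP.
  lia.
pose U := cover P.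
have cardU : #|U| <= (m-1)*(m-1).
  rewrite (leq_trans (leq_card_cover P).1) //.
  rewrite (@leq_trans (\sum_(A in P) (m-1))) //.
    apply: leq_sum => B BP; have /andP[_ ] := implyP (senP B) BP; lia.
  by rewrite sum_nat_const leq_mul2r cardP orbT.
apply: (@leq_trans #|U :|: H|); last first.
  by rewrite (leq_trans (leq_card_setU _ _).1) // leq_add.
apply: cert_le; apply/forallP=> z; apply/implyP=> /forallP agz.
apply/negPn/negP => fz.
have agi : forall i, i \in U :|: H -> x i == z i by move=> i iS; have := agz i; rewrite iS.
pose D := [set i | x i != z i].
pose okB (B : {set 'I_N}) := (B \subset D) && sensitive_block f x B.
have okD : okB D by rewrite /okB subxx /sensitive_block flip_diff.
case: (arg_minnP (fun B : {set 'I_N} => #|B|) okD) => B /andP[BD sB] minB.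
have Bmin : forall i, i \in B -> f (flip x (B :\ i)) = f x.
  move=> i iB; apply/eqP/negPn/negP => s.
  have := minB (B :\ i); rewrite /okB (subset_trans (subsetDl B [set i]) BD) /=.
  move=> /(_ s); rewrite (cardsD1 i B) iB add1n ltnn //.
have BU : forall i, i \in B -> i \in U -> False.
  move=> i iB iU; have := agi i; rewrite inE iU => /(_ isT).
  by have := subsetP BD i iB; rewrite inE => /negbTE ->.
case: (ltnP #|B| m) => hBm.
  have B0 : set0 \notin P.
    apply/negP=> P0; have /andP[s0 _] := implyP (senP set0) P0.
    by move: s0; rewrite /sensitive_block flip0 eqxx.
  have dis : {in P, forall C : {set 'I_N}, [disjoint B & C]}.
    move=> C CP; rewrite -setI_eq0; apply/eqP/setP=> i; rewrite !inE.
    apply/negP=> /andP[iB iC]; apply: (BU i iB).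
    by apply/bigcupP; exists C.
  case: (trivIsetU1 dis trP B0) => trP' BnP.
  have okP' : okP (B |: P).
    rewrite /okP trP' /=; apply/forallP=> C; apply/implyP; rewrite !inE.
    case/orP=> [/eqP -> |CP]; first by rewrite sB hBm.
    exact: (implyP (senP C) CP).
  have := maxP _ okP'; rewrite cardsU1 BnP /=; lia.
pose y := flip x B.
have ybad : m <= block_sensitivity f y.
  apply: (leq_trans hBm).
  rewrite -(card_imset B (@set1_inj _)).
  apply: bs_ge.
    apply/trivIsetP => C1 C2 /imsetP[i iB ->] /imsetP[j jB ->] ne.
    rewrite -setI_eq0; apply/eqP/setP=> k; rewrite !inE.
    apply/negP=> /andP[/eqP -> /eqP ij]; by move: ne; rewrite ij eqxx.
  move=> C /imsetP[i iB ->]; rewrite /sensitive_block flip_flip1 // Bmin //.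
  by rewrite eq_sym.
have := Hsep y; rewrite inE ybad /= => /existsP[i /andP[iH]].
rewrite /y ffunE; case: ifP => iB; last by rewrite eqxx.
have := agi i; rewrite inE iH orbT => /(_ isT).
by have := subsetP BD i iB; rewrite inE => /negbTE ->.
Qed.
Local Open Scope ring_scope.
Lemma card_input_gt0 N (P : pred (input N)) (x : input N) : P x -> (0 < #|[set y | P y]|)%N.
Proof. by move=> Px; apply/card_gt0P; exists x; rewrite inE. Qed.

Lemma Hindex_le (R : realType) N (G : input N -> nat) (K : R) :
  (forall h : R, K < h -> (#|[set x | h <= (G x)%:R]|)%:R < 2 `^ h) ->
  Hindex (fun x => (G x)%:R : R) <= K.
Proof.
move=> hK; rewrite /Hindex; apply: reals.ge_sup.
  exists 0; rewrite /= powRr0 ler1n.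
  by apply: (@card_input_gt0 N _ [ffun => false]); rewrite ler0n.
move=> h /= hh; rewrite leNgt; apply/negP=> Kh; have := hK h Kh.
by rewrite ltNge hh.
Qed.

Lemma Hindex_ge (R : realType) N (G : input N -> nat) (h : R) :
  2 `^ h <= (#|[set x | h <= (G x)%:R]|)%:R ->
  h <= Hindex (fun x => (G x)%:R : R).
Proof.
move=> hh; rewrite /Hindex; apply: reals.ub_le_sup => //.
exists (ln (#|input N|%:R) / ln 2) => y /= hy.
have l2 : 0 < ln (2:R) by apply: ln_gt0; rewrite ltr1n.
rewrite ler_pdivlMr // -ln_powR ler_ln ?posrE ?powR_gt0 //.
  apply: (le_trans hy); rewrite ler_nat; exact: max_card.
by rewrite ltr0n; apply/card_gt0P; exists [ffun => false].
Qed.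


Theorem theorem23 (R : realType) :
  exists c : R, 0 < c /\
    forall (N : nat), (2 <= N)%N -> forall f : input N -> bool,
      Hindex (fun x => (cert_complexity f x)%:R : R)
      <= c * (Hindex (fun x => (block_sensitivity f x)%:R : R)) ^+ 2 * ln (N%:R : R).
Proof.
have l2 : 0 < ln (2:R) by apply: ln_gt0; rewrite ltr1n.
exists (10 / ln 2); split; first by rewrite divr_gt0.
move=> N N2 f.
set hb := Hindex (fun x => (block_sensitivity f x)%:R : R).
have lN : ln (2:R) <= ln (N%:R : R) by rewrite ler_ln ?posrE ?ltr0n ?ler_nat //; lia.
case: (boolP [exists x, exists y, f x != f y]) => [nc|c]; last first.
  have C0 : forall x, cert_complexity f x = 0%N.
    move=> x; apply/eqP; rewrite -leqn0.
    apply: (leq_trans (@cert_le _ _ _ set0 _)); last by rewrite cards0.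
    apply/forallP=> y; apply/implyP=> _; apply/negPn/negP=> ne.
    move/negP: c; apply; apply/existsP; exists y; apply/existsP; exists x; exact: ne.
  apply: (le_trans (@Hindex_le _ _ _ 0 _)).
    move=> h h0; rewrite (_ : [set x | _] = set0) ?cards0 ?powR_gt0 //.
    by apply/setP=> x; rewrite !inE C0 leNgt h0.
  apply: mulr_ge0; last by apply: ln_ge0; rewrite ler1n; lia.
  by apply: mulr_ge0; [apply: ltW; rewrite divr_gt0 | apply: sqr_ge0].
have hb1 : 1 <= hb.
  apply: Hindex_ge; rewrite powRr1 ?ler0n //.
  have -> : [set x | 1 <= (block_sensitivity f x)%:R :> R] = setT.
    apply/setP=> x; rewrite !inE ler1n.
    case/existsP: nc => a /existsP[b ab].
    have [y xy] : exists y, f y != f x.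
      case: (eqVneq (f a) (f x)) => e; last by exists a.
      by exists b; rewrite -e eq_sym.
    apply: (leq_trans _ (@bs_ge _ f x [set [set i | x i != y i]] (trivIset1 _) _)).
      by rewrite cards1.
    by move=> B; rewrite inE => /eqP ->; rewrite /sensitive_block flip_diff.
  rewrite cardsT card_ffun card_bool card_ord ler_nat.
  by apply: (leq_trans N2); apply: ltnW; apply: ltn_expl.
set m := (Num.truncn hb).+1.
have hbm : hb < m%:R by apply: truncnS_gt.
have mhb : m%:R <= hb + 1.
  by rewrite -natr1 lerD2r truncn_le (le_trans _ hb1).
have badc : (#|[set y | (m <= block_sensitivity f y)%N]| < 2^m)%N.
  rewrite ltnNge; apply/negP => hc.
  have : m%:R <= hb.
    apply: Hindex_ge; rewrite powR_mulrn ?ler0n // -natrX ler_nat.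
    rewrite (@eq_card _ _ [set y | (m <= block_sensitivity f y)%N]) //.
    by move=> y; rewrite !inE ler_nat.
  by rewrite leNgt hbm.
have NS := NS_card badc.
set K0 := ((m-1)*(m-1) + m)%N.
have cntC : (#|[set x | (K0 < cert_complexity f x)%N]| <= N^(3 * m))%N.
  apply: (leq_trans (leq_trans (subset_leq_card _) NS)).
    apply/subsetP=> x; rewrite !inE; apply: contraL => sx.
    rewrite -leqNgt; exact: cert_small.
  rewrite expnM leq_exp2r //; nia.
pose K : R := K0%:R + (3 * m)%:R * ln N%:R / ln 2.
have t0 : 0 <= (3 * m)%:R * ln (N%:R : R) / ln 2.
  by apply: divr_ge0; [apply: mulr_ge0; [apply: ler0n | apply: le_trans lN; apply: ltW] | apply: ltW].
apply: (le_trans (@Hindex_le _ _ _ K _)).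
  move=> h Kh.
  have h0 : K0%:R < h by apply: le_lt_trans Kh; rewrite /K lerDl.
  set n := #|_|.
  have nle : (n <= N^(3 * m))%N.
    apply: leq_trans cntC; apply: subset_leq_card; apply/subsetP=> x; rewrite !inE.
    by move=> hx; rewrite -(ltr_nat R); apply: lt_le_trans hx.
  case: (posnP n) => [->|n0]; first by rewrite powR_gt0.
  rewrite -ltr_ln ?posrE ?ltr0n ?powR_gt0 // ln_powR.
  apply: (@le_lt_trans _ _ (ln (N^(3 * m))%:R)).
    by rewrite ler_ln ?posrE ?ltr0n ?ler_nat ?expn_gt0 //; lia.
  rewrite natrX lnXn ?ltr0n; last lia.
  have : (3 * m)%:R * ln (N%:R : R) / ln 2 < h.
    apply: le_lt_trans Kh; rewrite /K lerDr ler0n //.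
  rewrite ltr_pdivrMr // => H; apply: le_lt_trans H.
  by rewrite mulr_natl.
have K0m : (K0 <= m * m)%N by rewrite /K0; lia.
have K0R : (K0%:R : R) <= m%:R * m%:R by rewrite -natrM ler_nat.
rewrite /K.
set L := ln (N%:R : R); set a := ln (2:R).
have ta : a <= L by [].
have -> : (3 * m)%:R * L / a = 3 * m%:R * (L / a) by rewrite natrM mulrA.
have -> : 10 / a * hb ^+ 2 * L = 10 * hb ^+ 2 * (L / a) by ring.
have t1 : 1 <= L / a by rewrite ler_pdivlMr // mul1r.
set t := L / a.
have m0 : 0 <= (m%:R : R) by rewrite ler0n.
have m2 : (m%:R : R) <= 2 * hb by lra.
have s1 : m%:R * m%:R <= 4 * hb ^+ 2 :> R by nra.
have s2 : 4 * hb ^+ 2 <= 4 * hb ^+ 2 * t :> R.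
  rewrite -{1}[4 * hb ^+ 2]mulr1 ler_wpM2l // mulr_ge0 ?sqr_ge0 //.
have s3 : 3 * m%:R * t <= 6 * hb * t :> R.
  by rewrite ler_wpM2r ?(le_trans _ t1) //; lra.
have s4 : 6 * hb * t <= 6 * hb ^+ 2 * t :> R.
  rewrite ler_wpM2r ?(le_trans _ t1) // ler_wpM2l // expr2 -{1}[hb]mulr1 ler_wpM2l //.
  exact: le_trans hb1.
lra.
Qed.
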